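(* Let $k$ be a field, let $1\le d_0\le\cdots\le d_n$ be integers with $n\ge 1$, and let $S=k[x_0,\dots,x_n]$ be $\mathbb Z$-graded with $\deg(x_i)=d_i$ and homogeneous maximal ideal $\mathfrak m$. Let $X$ be a closed subvariety of the weighted projective space $\operatorname{Proj}(S)$ with (saturated) defining ideal $I_X\subseteq S$. If $S/I_X$ has Koszul regularity $r$, then $I_X$ is generated in degrees $<r+w^2$, where $w^2=d_{n-1}+d_n$.
   Context: Notation: for $0\le i\le n+1$, $w^i=\sum_{j=n-i+1}^n d_j$ is the sum of the $i$ largest degrees, with $w^0=0$ and $w^{-1}=-1$. A graded $S$-module $M$ is Koszul $r$-regular if the local cohomology satisfies $H^i_{\mathfrak m}(M)_d=0$ for all $i\ge 0$ and all $d\ge r-w^{i-1}$; the Koszul regularity of $M$ is the minimal $r$ such that $M$ is Koszul $r$-regular. *)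

(* Defs.v *)
From HB Require Import structures.
From mathcomp Require Import all_boot all_order all_algebra.
From mathcomp Require Import mpoly.
Set Implicit Arguments. Unset Strict Implicit. Unset Printing Implicit Defensive.
Import Order.TTheory GRing.Theory Num.Theory.
Local Open Scope ring_scope.

Section Defs.
Variables (k : fieldType) (n : nat) (d : 'I_n.+1 -> nat).
Notation S := {mpoly k[n.+1]}.

Definition wdeg (m : 'X_{1..n.+1}) : nat := (\sum_(i < n.+1) m i * d i)%N.

(* f is homogeneous of (weighted) degree e (0 is homogeneous of every degree) *)
Definition whomog (e : int) (f : S) : Prop :=
  forall m, m \in msupp f -> (wdeg m)%:Z = e.

Definition wcomp (e : int) (f : S) : S :=
  \sum_(m <- msupp f | (wdeg m)%:Z == e) f@_m *: 'X_[m].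

Definition is_ideal (I : S -> Prop) : Prop :=
  [/\ I 0, (forall f g, I f -> I g -> I (f + g)) & (forall f g, I g -> I (f * g))].

Definition is_prime_ideal (I : S -> Prop) : Prop :=
  [/\ is_ideal I, ~ I 1 & (forall f g, I (f * g) -> I f \/ I g)].

Definition homogeneous_ideal (I : S -> Prop) : Prop :=
  is_ideal I /\ forall f e, I f -> I (wcomp e f).

(* saturation w.r.t. m = (x_0,...,x_n): (I : m^oo) = I, m^N being generated
   by the monomials of total degree N *)
Definition saturated (I : S -> Prop) : Prop :=
  forall f : S, (exists N : nat, forall m : 'X_{1..n.+1}, mdeg m = N -> I ('X_[m] * f)) -> I f.

Definition xpow (J : {set 'I_n.+1}) (N : nat) : S := \prod_(j in J) 'X_j ^+ N.
Definition wset (J : {set 'I_n.+1}) : nat := (\sum_(j in J) d j)%N.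

Definition csign (j : 'I_n.+1) (K : {set 'I_n.+1}) : S :=
  (-1) ^+ #|[set i in K | (i < j)%N]|.

(* Cech complex of M = S/I w.r.t. x_0..x_n: C^p = (+)_{|J| = p} M_{x_J}.
   A homogeneous cochain of degree e in C^p is written with a common
   exponent N as the family (f_J / x_J^N)_{|J|=p}, f_J homogeneous of degree
   e + N * deg(x_J).  In M_{x_J}, g / x_J^N = 0 iff x_J^m g \in I for some m. *)
Definition cech_cochain (p : nat) (e : int) (N : nat) (f : {set 'I_n.+1} -> S) : Prop :=
  forall J : {set 'I_n.+1}, #|J| = p -> whomog (e + (N * wset J)%N%:Z) (f J).

Definition cech_cocycle (I : S -> Prop) (p : nat) (N : nat) (f : {set 'I_n.+1} -> S) : Prop :=
  forall K : {set 'I_n.+1}, #|K| = p.+1 ->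
    exists m : nat, I (xpow K m * \sum_(j in K) csign j K * f (K :\ j) * 'X_j ^+ N).

Definition cech_coboundary (I : S -> Prop) (p : nat) (e : int) (N : nat)
    (f : {set 'I_n.+1} -> S) : Prop :=
  exists (N' : nat) (g : {set 'I_n.+1} -> S),
    (forall L : {set 'I_n.+1}, #|L|.+1 = p -> whomog (e + (N' * wset L)%N%:Z) (g L)) /\
    forall J : {set 'I_n.+1}, #|J| = p ->
      exists m : nat, I (xpow J m *
        (xpow J N' * f J - xpow J N * \sum_(j in J) csign j J * g (J :\ j) * 'X_j ^+ N')).

(* H^p_m(S/I)_e = 0, computed by the Cech complex *)
Definition loccoh_vanish (I : S -> Prop) (p : nat) (e : int) : Prop :=
  forall (N : nat) (f : {set 'I_n.+1} -> S),
    cech_cochain p e N f -> cech_cocycle I p N f -> cech_coboundary I p e N f.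

(* w^i = sum of the i largest degrees d_{n-i+1} + ... + d_n *)
Definition wtop (i : nat) : nat := (\sum_(j < n.+1 | (n.+1 - i <= j)%N) d j)%N.

(* w^{p-1}, with w^{-1} = -1 *)
Definition wprev (p : nat) : int := if p is p'.+1 then (wtop p')%:Z else -1.

Definition koszul_regular (I : S -> Prop) (r : int) : Prop :=
  forall (p : nat) (e : int), r - wprev p <= e -> loccoh_vanish I p e.

Definition koszul_regularity_is (I : S -> Prop) (r : int) : Prop :=
  koszul_regular I r /\ forall r', koszul_regular I r' -> r <= r'.

Definition generated_in_degrees_lt (I : S -> Prop) (b : int) : Prop :=
  forall f, I f -> exists s : seq (S * S),
    (forall q, q \in s -> I q.2 /\ exists e : int, e < b /\ whomog e q.2) /\
    f = \sum_(q <- s) q.1 * q.2.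

End Defs.

(* Main.v *)
Require Import Defs.
From HB Require Import structures.
From mathcomp Require Import all_boot all_order all_algebra.
From mathcomp Require Import mpoly.
From mathcomp Require Import zify ring.
From Stdlib Require Import IndefiniteDescription.
Set Implicit Arguments. Unset Strict Implicit. Unset Printing Implicit Defensive.
Import Order.TTheory GRing.Theory Num.Theory.
Local Open Scope ring_scope.


Section Graded.
Variables (k : fieldType) (n : nat) (d : 'I_n.+1 -> nat).
Notation S := {mpoly k[n.+1]}.
Notation hom := (@whomog k n d).

Lemma wdegD (m1 m2 : 'X_{1..n.+1}) : wdeg d (m1 + m2)%MM = (wdeg d m1 + wdeg d m2)%N.
Proof.
rewrite /wdeg -big_split /=; apply: eq_bigr => i _; by rewrite mnmDE mulnDl.
Qed.

Lemma wdeg0 : wdeg d 0%MM = 0%N.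
Proof. by rewrite /wdeg big1 // => i _; rewrite mnm0E. Qed.

Lemma wdegU (i : 'I_n.+1) : wdeg d U_(i)%MM = d i.
Proof.
rewrite /wdeg (bigD1 i) //= big1 ?addn0; first by rewrite mnm1E eqxx mul1n.
by move=> j ji; rewrite mnm1E eq_sym (negbTE ji) mul0n.
Qed.

Lemma hom_eq e1 e2 f : e1 = e2 -> hom e1 f -> hom e2 f.
Proof. by move=> ->. Qed.

Lemma hom0 e : hom e 0.
Proof. by move=> m; rewrite msupp0. Qed.

Lemma homD e f g : hom e f -> hom e g -> hom e (f + g).
Proof. by move=> hf hg m /msuppD_le; rewrite mem_cat => /orP[/hf|/hg]. Qed.

Lemma homN e f : hom e f -> hom e (- f).
Proof. by move=> hf m; rewrite (perm_mem (msuppN _)) => /hf. Qed.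

Lemma homB e f g : hom e f -> hom e g -> hom e (f - g).
Proof. by move=> hf hg; apply: homD => //; apply: homN. Qed.

Lemma homM e1 e2 f g : hom e1 f -> hom e2 g -> hom (e1 + e2) (f * g).
Proof.
move=> hf hg m /msuppM_le /allpairsP [[m1 m2] /= [/hf h1 /hg h2 ->]].
by rewrite wdegD PoszD h1 h2.
Qed.

Lemma homZ e c f : hom e f -> hom e (c *: f).
Proof. by move=> hf m /msuppZ_le /hf. Qed.

Lemma hom_sum e (I : Type) (r : seq I) (P : pred I) (F : I -> S) :
  (forall i, P i -> hom e (F i)) -> hom e (\sum_(i <- r | P i) F i).
Proof. by move=> h; apply: (big_ind (hom e)) => //; [apply: hom0 | apply: homD]. Qed.

Lemma homC c : hom 0 c%:MP.
Proof.
move=> m; rewrite msuppC; case: (c == 0) => //; rewrite inE => /eqP ->.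
by rewrite wdeg0.
Qed.

Lemma hom1 : hom 0 1.
Proof. exact: homC. Qed.

Lemma homX (i : 'I_n.+1) : hom (d i) 'X_i.
Proof. by move=> m; rewrite msuppX inE => /eqP ->; rewrite wdegU. Qed.

Lemma homXn (i : 'I_n.+1) N : hom (N * d i)%N ('X_i ^+ N).
Proof.
elim: N => [|N ih]; first by rewrite expr0 mul0n; apply: hom1.
rewrite exprS mulSn PoszD; exact: homM (@homX i) ih.
Qed.

Lemma homsign j K : hom 0 (csign k j K).
Proof.
rewrite /csign; elim: #|_| => [|N ih]; first by rewrite expr0; apply: hom1.
rewrite exprS; apply: (hom_eq (add0r 0)); apply: (homM _ ih).
by rewrite -scaleN1r; apply: homZ; apply: hom1.
Qed.

Lemma homxpow J N : hom (N * wset d J)%N (xpow k J N).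
Proof.
rewrite /xpow /wset big_distrr /=.
elim/big_rec2: _ => [|j y p _ hp]; first exact: hom1.
rewrite PoszD; apply: homM hp; exact: homXn.
Qed.


End Graded.

Arguments homsign {k n} d j K.
Arguments homX {k n} d i.
Arguments homXn {k n} d i N.
Arguments homxpow {k n} d J N.
Arguments homC {k n} d c.
Arguments hom1 {k n} d.


Section Signs.
Variables (k : fieldType) (n : nat).
Notation S := {mpoly k[n.+1]}.
Notation I := 'I_n.+1.
Notation sg := (@csign k n).
Implicit Types (i j x : I) (X : {set I}).

Definition cnt (x : I) (X : {set I}) : nat := #|[set i in X | (i < x)%N]|.

Lemma sgE x X : sg x X = (-1) ^+ cnt x X.
Proof. by []. Qed.

Lemma cntU i x X : i \notin X -> cnt x (i |: X) = ((i < x)%N + cnt x X)%N.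
Proof.
move=> iX; rewrite /cnt.
have -> : [set y in i |: X | (y < x)%N] =
   (if (i < x)%N then i |: [set y in X | (y < x)%N] else [set y in X | (y < x)%N]).
  apply/setP => y; rewrite !inE; case: (boolP (i < x)%N) => hi; rewrite ?inE;
    case: (eqVneq y i) => [->|] //=; rewrite ?hi ?(negbTE hi) ?andbF //.
case: (boolP (i < x)%N) => hi //; rewrite cardsU1 inE (negbTE iX) //.
Qed.

Lemma cntD1 i x X : i \in X -> cnt x X = ((i < x)%N + cnt x (X :\ i))%N.
Proof. by move=> iX; rewrite -{1}(setD1K iX) cntU // setD11. Qed.

Lemma cnt_self x X : cnt x (x |: X) = cnt x X.
Proof.
case: (boolP (x \in X)) => xX; first by rewrite (setUidPr _) // sub1set.
by rewrite cntU // ltnn.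
Qed.

Lemma sgU i x X : i \notin X -> sg x (i |: X) = (-1) ^+ (i < x)%N * sg x X.
Proof. by move=> iX; rewrite !sgE cntU // exprD. Qed.

Lemma sgD1 i x X : i \in X -> sg x X = (-1) ^+ (i < x)%N * sg x (X :\ i).
Proof. by move=> iX; rewrite !sgE (cntD1 x iX) exprD. Qed.

Lemma sg_self x X : sg x (x |: X) = sg x X.
Proof. by rewrite !sgE cnt_self. Qed.

Lemma sg2 x X : sg x X * sg x X = 1.
Proof. by rewrite sgE -exprD addnn -mul2n exprM sqrrN expr1n expr1n. Qed.

Lemma sgswap (i j : I) : i != j -> (-1) ^+ (i < j)%N = - (-1) ^+ (j < i)%N :> S.
Proof.
move=> ij; case: (ltngtP i j) => h; rewrite ?expr1 ?expr0 ?opprK //.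
by move/eqP: ij; case; apply: val_inj.
Qed.

End Signs.


Section Cx.
Variables (k : fieldType) (n : nat).
Notation S := {mpoly k[n.+1]}.
Notation I := 'I_n.+1.
Notation sg := (@csign k n).
Implicit Types (i j x : I) (X J K A B L : {set I}).

Lemma pair_sum0 (F : I -> I -> S) :
  (forall i, F i i = 0) -> (forall i j, i != j -> F j i = - F i j) ->
  \sum_(i : I) \sum_(j : I) F i j = 0.
Proof.
move=> F0 Fa.
have -> : \sum_(i : I) \sum_(j : I) F i j =
  \sum_(i : I) \sum_(j : I) (if (j < i)%N then F i j else 0) +
  \sum_(i : I) \sum_(j : I) (if (i < j)%N then F i j else 0).
  rewrite -big_split; apply: eq_bigr => i _; rewrite -big_split.
  apply: eq_bigr => j _ /=; case: ltngtP => h; rewrite ?addr0 ?add0r //.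
  by have -> : j = i by apply: val_inj.
rewrite [X in _ + X]exchange_big /=.
rewrite -big_split big1 //= => i _; rewrite -big_split big1 //= => j _.
case: ltngtP => h; rewrite ?addr0 //.
have ij : i != j by apply/eqP => eij; rewrite eij ltnn in h.
by rewrite (Fa i j ij) subrr.
Qed.

Definition dK (b : {set I} -> {set I} -> S) J B : S :=
  \sum_(i | i \notin B) sg i (i |: B) * 'X_i * b J (i |: B).

Definition dC (N : nat) (a : {set I} -> {set I} -> S) K A : S :=
  \sum_(j in K) sg j K * a (K :\ j) A * 'X_j ^+ N.

Lemma dKdK b J B : dK (dK b) J B = 0.
Proof.
rewrite /dK.
under eq_bigr => i iB do rewrite big_distrr /=.
rewrite big_mkcond /=.
under eq_bigr => i _ do rewrite big_mkcond /=.
set F := (fun i j : I => if i \notin B then (if j \notin i |: B then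
     sg i (i |: B) * 'X_i * (sg j (j |: (i |: B)) * 'X_j * b J (j |: (i |: B))) else 0) else 0).
transitivity (\sum_(i : I) \sum_(j : I) F i j).
  apply: eq_bigr => i _; rewrite /F; case: (i \notin B) => //; by rewrite big1.
apply: pair_sum0 => [i|i j ij]; first by rewrite /F setU11 /= if_same.
rewrite /F !in_setU1 !negb_or.
case: (boolP (i \in B)) => iB; rewrite ?andbF ?oppr0 //=; case: (boolP (j \in B)) => jB; rewrite ?andbF ?oppr0 //=.
rewrite ij (eq_sym j i) ij /= setUCA !sg_self !sgU //.
rewrite (@sgswap k n _ _ ij).
- rewrite ltnn expr0 mul1r.
  move: (sg j B) (sg i B) ('X_i : S) ('X_j : S) (b J (j |: (i |: B))) ((-1) ^+ (j < i) : S) => a1 a2 a3 a4 a5 a6.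
  ring.
- by rewrite in_setU1 negb_or eq_sym ij.
Qed.

Lemma sgb2 (c : bool) : ((-1) ^+ c : S) * (-1) ^+ c = 1.
Proof. by case: c; rewrite ?expr1 ?expr0 ?mulr1 // mulrNN mulr1. Qed.

Lemma dCdC N a K A : dC N (dC N a) K A = 0.
Proof.
rewrite /dC.
under eq_bigr => j jK do rewrite big_distrr big_distrl /=.
rewrite big_mkcond /=.
under eq_bigr => j _ do rewrite big_mkcond /=.
set F := (fun j i : I => if j \in K then (if i \in K :\ j then
     sg j K * (sg i (K :\ j) * a ((K :\ j) :\ i) A * 'X_i ^+ N) * 'X_j ^+ N else 0) else 0).
transitivity (\sum_(j : I) \sum_(i : I) F j i).
  apply: eq_bigr => j _; rewrite /F; case: (j \in K) => //; by rewrite big1.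
apply: pair_sum0 => [i|j i ij]; first by rewrite /F setD11 /= if_same.
rewrite /F !in_setD1.
case: (boolP (i \in K)) => iK; rewrite ?andbF ?oppr0 //=; case: (boolP (j \in K)) => jK; rewrite ?andbF ?oppr0 //=.
rewrite ij (eq_sym i j) ij /=.
have -> : (K :\ i) :\ j = (K :\ j) :\ i by rewrite setDDl setUC -setDDl.
rewrite (@sgD1 k n i j K iK) (@sgD1 k n j i K jK) (@sgswap k n _ _ ij).
move: (sg i (K :\ j)) (sg j (K :\ i)) ('X_i ^+ N : S) ('X_j ^+ N : S) (a ((K :\ j) :\ i) A) ((-1) ^+ (i < j) : S) => a1 a2 a3 a4 a5 a6.
ring.
Qed.

Lemma dKdC N a K B : dK (dC N a) K B = dC N (dK a) K B.
Proof.
rewrite /dK /dC.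
under eq_bigr => i _ do rewrite big_distrr /=.
rewrite exchange_big /=; apply: eq_bigr => j _.
rewrite big_distrr big_distrl /=; apply: eq_bigr => i _.
move: (sg i (i |: B)) (sg j K) ('X_i : S) ('X_j ^+ N : S) (a (K :\ j) (i |: B)) => a1 a2 a3 a4 a5.
ring.
Qed.

Definition hj j (c : S) (b : {set I} -> {set I} -> S) K A : S :=
  if j \in A then sg j A * b K (A :\ j) * c else 0.

Lemma setD1U1 i j A : i != j -> (i |: A) :\ j = i |: (A :\ j).
Proof.
move=> ij; apply/setP => y; rewrite !inE.
case: (eqVneq y i) => [->|] //=; by rewrite ij.
Qed.

Lemma homot j (c : S) b K A :
  dK (hj j c b) K A + hj j c (dK b) K A = 'X_j * c * b K A.
Proof.
rewrite /hj /dK; case: (boolP (j \in A)) => jA.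
- rewrite (big_distrr (sg j A)) /= big_distrl /=.
  rewrite [X in _ + X](bigD1 j) /=; last by rewrite setD11.
  rewrite setD1K // addrCA.
  set s1 := \sum_(i | _) _; set s2 := \sum_(i | _) _.
  suff -> : s1 + s2 = 0.
    rewrite addr0; clear s1 s2; move: (sg j A) (@sg2 k n j A) ('X_j : S) c (b K A) => a1 h a2 a3 a4.
    by rewrite -[RHS]mul1r -h; ring.
  rewrite /s1 /s2.
  have -> : \sum_(i : I | (i \notin A :\ j) && (i != j))
        sg j A * (sg i (i |: A :\ j) * 'X_i * b K (i |: A :\ j)) * c =
       \sum_(i : I | i \notin A) sg j A * (sg i (i |: A :\ j) * 'X_i * b K (i |: A :\ j)) * c.
    apply: eq_bigl => i; rewrite in_setD1 negb_and negbK.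
    case: (eqVneq i j) => [->|ij]; by rewrite ?jA ?andbT ?andbF.
  clear s1 s2; rewrite -big_split big1 //= => i iA.
  have ij : i != j by apply: contraNneq iA => ->.
  rewrite in_setU1 jA orbT setD1U1 // !sg_self (@sgU k n i j A iA) (@sgD1 k n j i A jA).
  rewrite (@sgswap k n _ _ ij).
  move: (sg i (A :\ j)) (sg j A) ('X_i : S) (c) (b K (i |: A :\ j)) ((-1) ^+ (j < i) : S) (sgb2 (j < i)%N) => a1 a2 a3 a4 a5 a6 h6.
  have -> : a6 * a1 * a3 * (- a6 * a2 * a5 * a4) = - ((a6 * a6) * (a2 * (a1 * a3 * a5) * a4)) by ring.
  by rewrite h6 mul1r addNr.
- rewrite addr0 (bigD1 j) //= setU11 setU1K // mulrA.
  rewrite big1 ?addr0; first by rewrite sg_self; move: (sg j A) (@sg2 k n j A) ('X_j : S) c (b K A) => a1 h a2 a3 a4;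
     rewrite -[RHS]mul1r -h; ring.
  move=> i /andP [iA ij]; rewrite in_setU1 eq_sym (negbTE ij) (negbTE jA) /=.
  by rewrite mulr0.
Qed.

End Cx.


Section Xpow.
Variables (k : fieldType) (n : nat).
Notation S := {mpoly k[n.+1]}.
Notation I := 'I_n.+1.
Notation xp := (@xpow k n).
Implicit Types (i j : I) (J K A B L : {set I}).

Lemma xpowD J a b : xp J (a + b)%N = xp J a * xp J b.
Proof. by rewrite /xpow -big_split /=; apply: eq_bigr => i _; rewrite exprD. Qed.

Lemma xpowD1 j K t : j \in K -> xp K t = 'X_j ^+ t * xp (K :\ j) t.
Proof. by move=> jK; rewrite /xpow (big_setD1 _ jK). Qed.

Lemma xpow_set0 t : xp set0 t = 1.
Proof. by rewrite /xpow big_set0. Qed.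

Lemma xpow_sub J K t : J \subset K -> xp K t = xp (K :\: J) t * xp J t.
Proof.
move=> JK; rewrite /xpow (big_setID J) /= mulrC; congr (_ * _).
by rewrite (setIidPr JK).
Qed.

End Xpow.

Section ZZ.
Variables (k : fieldType) (n : nat) (IX : {mpoly k[n.+1]} -> Prop).
Hypothesis hI : is_ideal IX.
Notation S := {mpoly k[n.+1]}.
Notation I := 'I_n.+1.
Notation xp := (@xpow k n).
Notation sg := (@csign k n).
Implicit Types (i j : I) (J K A B L : {set I}).

Definition Z J (u : S) := exists m, IX (xp J m * u).

Lemma I0 : IX 0. Proof. by case: hI. Qed.
Lemma IaddP u v : IX u -> IX v -> IX (u + v). Proof. by case: hI => _ h _; apply: h. Qed.
Lemma ImulP u v : IX v -> IX (u * v). Proof. by case: hI => _ _ h; apply: h. Qed.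

Lemma ZI J u : IX u -> Z J u.
Proof. by move=> h; exists 0%N; apply: ImulP. Qed.

Lemma Z0 J : Z J 0.
Proof. exact/ZI/I0. Qed.

Lemma ZM J u v : Z J u -> Z J (v * u).
Proof. by case=> m h; exists m; rewrite mulrCA; apply: ImulP. Qed.

Lemma ZMr J u v : Z J u -> Z J (u * v).
Proof. by rewrite mulrC; apply: ZM. Qed.

Lemma ZD J u v : Z J u -> Z J v -> Z J (u + v).
Proof.
case=> m1 h1 [m2 h2]; exists (m1 + m2)%N.
rewrite xpowD mulrDr; apply: IaddP.
  by rewrite mulrAC mulrC; apply: ImulP.
by rewrite -mulrA; apply: ImulP.
Qed.

Lemma ZN J u : Z J u -> Z J (- u).
Proof. by move=> h; rewrite -mulN1r; apply: ZM. Qed.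

Lemma ZB J u v : Z J u -> Z J v -> Z J (u - v).
Proof. by move=> hu hv; apply: ZD => //; apply: ZN. Qed.

Lemma Zsum J (T : Type) (r : seq T) (P : pred T) (F : T -> S) :
  (forall t, P t -> Z J (F t)) -> Z J (\sum_(t <- r | P t) F t).
Proof. by move=> h; apply: (big_ind (Z J)) => //; [apply: Z0 | apply: ZD]. Qed.

Lemma Zsub J K u : J \subset K -> Z J u -> Z K u.
Proof.
move=> JK [m h]; exists m; rewrite (xpow_sub _ _ JK) -mulrA; exact: ImulP.
Qed.

Lemma Zset0 u : Z set0 u -> IX u.
Proof. by case=> m; rewrite xpow_set0 mul1r. Qed.

Lemma Zeq J u v : u = v -> Z J u -> Z J v.
Proof. by move=> ->. Qed.

Lemma dC_Z q N (u : {set I} -> {set I} -> S) K A :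
  (forall L, #|L| = q -> Z L (u L A)) -> #|K| = q.+1 -> Z K (dC N u K A).
Proof.
move=> hu hK; apply: Zsum => j jK; apply: ZMr; apply: ZM.
apply: (@Zsub (K :\ j)); first exact: subsetDl.
by apply: hu; move: hK; rewrite (cardsD1 j) jK add1n; case.
Qed.

Lemma dK_Z q (u : {set I} -> {set I} -> S) J B :
  (forall B', #|B'| = q.+1 -> Z J (u J B')) -> #|B| = q -> Z J (dK u J B).
Proof.
move=> hu hB; apply: Zsum => i iB; apply: ZM; apply: hu.
by rewrite cardsU1 iB hB.
Qed.

Lemma dKB (u v : {set I} -> {set I} -> S) J B :
  dK (fun J A => u J A - v J A) J B = dK u J B - dK v J B.
Proof. by rewrite /dK -sumrB; apply: eq_bigr => i _; rewrite mulrBr. Qed.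

Lemma dCB N (u v : {set I} -> {set I} -> S) K A :
  dC N (fun J A => u J A - v J A) K A = dC N u K A - dC N v K A.
Proof. by rewrite /dC -sumrB; apply: eq_bigr => i _; rewrite mulrBr mulrBl. Qed.

Lemma dKM (f : {set I} -> S) (u : {set I} -> {set I} -> S) J B :
  dK (fun J A => f J * u J A) J B = f J * dK u J B.
Proof.
rewrite /dK big_distrr; apply: eq_bigr => i _.
move: (sg i (i |: B)) ('X_i : S) (f J) (u J (i |: B)) => a1 a2 a3 a4 /=; ring.
Qed.

Lemma dC_raise N t (g : {set I} -> {set I} -> S) K A :
  dC (N + t) (fun L A => g L A * xp L t) K A = xp K t * dC N g K A.
Proof.
rewrite /dC big_distrr /=; apply: eq_bigr => j jK.
rewrite (@xpowD1 k n j K t jK) exprD.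
move: (sg j K) ('X_j ^+ N : S) ('X_j ^+ t : S) (g (K :\ j) A) (xp (K :\ j) t) => a1 a2 a3 a4 a5; ring.
Qed.

Definition pickK K : I := odflt ord0 [pick j in K].

Lemma pickK_in K : K != set0 -> pickK K \in K.
Proof.
rewrite /pickK; case: pickP => [x ->|h] //.
by case/set0Pn => x; rewrite h.
Qed.

Definition hK (b : {set I} -> {set I} -> S) K A : S :=
  hj (pickK K) (xp (K :\ pickK K) 1) b K A.

Lemma rowex (b : {set I} -> {set I} -> S) K A :
  K != set0 -> (pickK K \in A -> Z K (dK b K (A :\ pickK K))) ->
  Z K (xp K 1 * b K A - dK (hK b) K A).
Proof.
move=> K0 hz.
have := homot (pickK K) (xp (K :\ pickK K) 1) b K A.
rewrite -/(dK (hK b) K A) => e.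
rewrite (@xpowD1 k n _ K 1 (pickK_in K0)) expr1 -e addrC addKr.
rewrite /hj; case: ifP => jA; last exact: Z0.
by apply: ZMr; apply: ZM; apply: hz.
Qed.

End ZZ.


Section Chase.
Variables (k : fieldType) (n : nat) (d : 'I_n.+1 -> nat) (IX : {mpoly k[n.+1]} -> Prop).
Hypothesis hI : is_ideal IX.
Variable e0 : int.
Hypothesis hvan : forall (p : nat) (A : {set 'I_n.+1}), #|A| = p.+1 ->
  loccoh_vanish d IX p (e0 - (wset d A)%:Z).
Notation S := {mpoly k[n.+1]}.
Notation I := 'I_n.+1.
Notation xp := (@xpow k n).
Notation sg := (@csign k n).
Notation hom := (@whomog k n d).
Notation w := (wset d).
Notation Z := (Z IX).
Implicit Types (i j : I) (J K A B L : {set I}).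

Lemma wsetD1 j K : j \in K -> w K = (d j + w (K :\ j))%N.
Proof. by move=> jK; rewrite /wset (big_setD1 _ jK). Qed.

Lemma wsetU1 i A : i \notin A -> w (i |: A) = (d i + w A)%N.
Proof. by move=> iA; rewrite /wset (big_setU1 _ iA). Qed.

Lemma card_le A : (#|A| <= n.+1)%N.
Proof. by have := max_card (mem A); rewrite card_ord. Qed.

Definition dhom p q N (a : {set I} -> {set I} -> S) :=
  forall J A, #|J| = p -> #|A| = q -> hom (e0 - (w A)%:Z + (N * w J)%N%:Z) (a J A).

Lemma hom_dK p q N c J B : dhom p q.+1 N c -> #|J| = p -> #|B| = q ->
  hom (e0 - (w B)%:Z + (N * w J)%N%:Z) (dK c J B).
Proof.
move=> hc hJ hB; apply: hom_sum => i iB.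
have := homM (homM (homsign d i (i |: B)) (homX d i)) (hc J (i |: B) hJ _).
rewrite cardsU1 iB hB => /(_ erefl); apply: hom_eq.
rewrite wsetU1 //; lia.
Qed.

Lemma hom_dC p q N a K A : dhom p q N a -> #|K| = p.+1 -> #|A| = q ->
  hom (e0 - (w A)%:Z + (N * w K)%N%:Z) (dC N a K A).
Proof.
move=> ha hK hA; apply: hom_sum => j jK.
have hK' : #|K :\ j| = p by move: hK; rewrite (cardsD1 j) jK add1n; case.
have := homM (homM (homsign d j K) (ha _ _ hK' hA)) (homXn d j N).
apply: hom_eq; rewrite (wsetD1 jK) mulnDr. move: (w A) (w (K :\ j)) (d j) => x y z; lia.
Qed.

Definition Rstmt p := forall N a, dhom p p.+1 N a ->
  (forall K B, #|K| = p.+1 -> #|B| = p -> Z K (dK (dC N a) K B)) ->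
  exists t c g, dhom p p.+2 (N + t) c /\
   (forall L A, (#|L|).+1 = p -> #|A| = p.+1 ->
       hom (e0 - (w A)%:Z + ((N + t) * w L)%N%:Z) (g L A)) /\
   (forall J A, #|J| = p -> #|A| = p.+1 ->
       Z J (xp J t * a J A - dK c J A - dC (N + t) g J A)).

Lemma Rbase p : (n.+1 <= p)%N -> Rstmt p.
Proof.
move=> hp N a _ _; exists 0%N, (fun _ _ => 0), (fun _ _ => 0); split; last split.
- by move=> J A _ _; apply: hom0.
- by move=> L A _ _; apply: hom0.
- move=> J A _ hA; have := card_le A; rewrite hA; lia.
Qed.

Lemma Rstep p : Rstmt p.+1 -> Rstmt p.
Proof.
move=> IH N a ha hz.
pose b := dC N a.
pose a1 := hK b.
have Kne : forall K, #|K| = p.+1 -> K != set0.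
  by move=> K hK; apply/negP => /eqP K0; rewrite K0 cards0 in hK.
have ha1 : dhom p.+1 p.+2 (N + 1) a1.
  move=> K A hKc hA; rewrite /a1 /hK /hj.
  case: ifP => jA; last exact: hom0.
  have jK := pickK_in (Kne _ hKc).
  have hA' : #|A :\ pickK K| = p.+1 by move: hA; rewrite (cardsD1 (pickK K)) jA add1n; case.
  have := homM (homM (homsign d (pickK K) A) (hom_dC ha hKc hA')) (homxpow d (K :\ pickK K) 1).
  apply: hom_eq; rewrite (wsetD1 jA) (wsetD1 jK).
  move: (w (A :\ pickK K)) (w (K :\ pickK K)) (d (pickK K)) => x y z; nia.
have hrow : forall K A, #|K| = p.+1 -> #|A| = p.+1 -> Z K (xp K 1 * b K A - dK a1 K A).
  move=> K A hK hA; apply: (rowex hI (Kne _ hK)) => jA.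
  apply: hz => //; by move: hA; rewrite (cardsD1 (pickK K)) jA add1n; case.
have hz1 : forall K B, #|K| = p.+2 -> #|B| = p.+1 -> Z K (dK (dC (N + 1) a1) K B).
  move=> K B hK hB; rewrite dKdC.
  have -> : dC (N + 1) (dK a1) K B =
     dC (N + 1) (fun K A => dK a1 K A - b K A * xp K 1) K B +
     dC (N + 1) (fun K A => b K A * xp K 1) K B by rewrite dCB subrK.
  rewrite dC_raise /b dCdC mulr0 addr0.
  apply: (dC_Z hI (q := p.+1)) => // L hL.
  have := ZN hI (hrow L B hL hB); apply: Zeq; rewrite opprB mulrC //.
have [t1 [c1 [g1 [hc1 [hg1 hr1]]]]] := IH (N + 1)%N a1 ha1 hz1.
pose M := (N + (1 + t1))%N.
have eM : (N + 1 + t1 = M)%N by rewrite /M addnA.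
rewrite eM in hc1 hg1 hr1.
have hg1' : dhom p p.+2 M g1 by move=> J A hJ hA; apply: hg1 => //; rewrite hJ.
pose a' := fun J A => a J A * xp J (1 + t1) - dK g1 J A.
have ha' : dhom p p.+1 M a'.
  move=> J A hJ hA; apply: homB.
    have := homM (ha J A hJ hA) (homxpow d J (1 + t1)); apply: hom_eq.
    rewrite /M; move: (w A) (w J) => x y; nia.
  exact: hom_dK hg1' hJ hA.
have hcoc : forall K A, #|K| = p.+1 -> #|A| = p.+1 -> Z K (dC M a' K A).
  move=> K A hK hA; rewrite /a' dCB /M dC_raise -/M -dKdC.
  pose D := fun K B => xp K t1 * a1 K B - dK c1 K B - dC M g1 K B.
  have e : dK (dC M g1) K A = xp K t1 * dK a1 K A - dK D K A.
    rewrite /D (dKB (fun J B => xp J t1 * a1 J B - dK c1 J B) (dC M g1)).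
    rewrite (dKB (fun J B => xp J t1 * a1 J B) (dK c1)) dKdK subr0 dKM.
    by rewrite opprB addrC subrK.
  rewrite e.
  have -> : xp K (1 + t1) * dC N a K A - (xp K t1 * dK a1 K A - dK D K A) =
     xp K t1 * (xp K 1 * b K A - dK a1 K A) + dK D K A.
    rewrite xpowD /b; move: (xp K 1) (xp K t1) (dC N a K A) (dK a1 K A) (dK D K A) => u1 u2 u3 u4 u5.
    ring.
  apply: (ZD hI); first by apply: (ZM hI); apply: hrow.
  apply: (dK_Z hI (q := p.+1)) => // B' hB'; exact: hr1.
pose P := fun A (x : nat * ({set I} -> S)) => #|A| = p.+1 ->
  (forall L, (#|L|).+1 = p -> hom (e0 - (w A)%:Z + (x.1 * w L)%N%:Z) (x.2 L)) /\
  (forall J, #|J| = p -> Z J (xp J x.1 * a' J A - xp J M * dC x.1 (fun L _ => x.2 L) J A)).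
have hex : forall A, exists x, P A x.
  move=> A; case: (eqVneq #|A| p.+1) => hA; last first.
    by exists (0%N, (fun _ => 0) : {set I} -> S) => /eqP; rewrite (negbTE hA).
  have hv : loccoh_vanish d IX p (e0 - (w A)%:Z) := hvan hA.
  have [] := hv M (fun J => a' J A).
  - by move=> J hJ; apply: ha'.
  - by move=> K hK; have := hcoc K A hK hA.
  move=> N' [g [hg hc]]; exists (N', g) => _; split => //.
pose F := fun A => proj1_sig (constructive_indefinite_description _ (hex A)).
have hF : forall A, P A (F A) := fun A => proj2_sig (constructive_indefinite_description _ (hex A)).
pose NA := fun A => (F A).1.
pose gA := fun A => (F A).2.
have hF' : forall A, #|A| = p.+1 ->
  (forall L, (#|L|).+1 = p -> hom (e0 - (w A)%:Z + (NA A * w L)%N%:Z) (gA A L)) /\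
  (forall J, #|J| = p -> Z J (xp J (NA A) * a' J A - xp J M * dC (NA A) (fun L _ => gA A L) J A)).
  by move=> A; exact: hF A.
clearbody NA gA; clear hF F hex.
pose T := (\sum_(A : {set I}) NA A)%N.
have hNT : forall A, (NA A <= T)%N by move=> A; rewrite /T (bigD1 A) //= leq_addr.
clearbody T.
pose g2 := fun L A => gA A L * xp L (T - NA A).
have hv2 : forall J A, #|J| = p -> #|A| = p.+1 ->
    Z J (xp J T * a' J A - xp J M * dC T g2 J A).
  move=> J A hJ hA.
  have [_ hZ] := hF' A hA.
  have e : dC T g2 J A = xp J (T - NA A) * dC (NA A) (fun L _ => gA A L) J A.
    have := dC_raise (NA A) (T - NA A) (fun L _ => gA A L) J A.
    by rewrite subnKC.
  rewrite e.
  have eT : xp J T = xp J (NA A) * xp J (T - NA A) by rewrite -xpowD subnKC.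
  have := ZM hI (xp J (T - NA A)) (hZ J hJ); apply: Zeq.
  rewrite eT.
  move: (xp J (NA A)) (xp J (T - NA A)) (a' J A) (xp J M) (dC (NA A) (fun L _ => gA A L) J A) => u1 u2 u3 u4 u5.
  ring.
exists (T + (1 + t1))%N, (fun J A => xp J T * g1 J A), (fun L A => g2 L A * xp L M).
split; [|split].
- move=> J A hJ hA.
  have := homM (homxpow d J T) (hg1' J A hJ hA); apply: hom_eq.
  rewrite /M; move: (w A) (w J) => x y; nia.
- move=> L A hL hA.
  have [hg _] := hF' A hA.
  have := homM (homM (hg L hL) (homxpow d L (T - NA A))) (homxpow d L M); apply: hom_eq.
  have := hNT A; rewrite /M; move: (w A) (w L) (NA A) => x y z hzu; nia.
- move=> J A hJ hA.
  rewrite (dKM (fun J => xp J T) g1 J A).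
  have eE : (N + (T + (1 + t1)) = T + M)%N by rewrite /M; lia.
  rewrite eE (dC_raise T M g2 J A) xpowD.
  have := hv2 J A hJ hA; apply: Zeq; rewrite /a'.
  move: (xp J T) (xp J (1 + t1)) (a J A) (dK g1 J A) (xp J M) (dC T g2 J A) => u1 u2 u3 u4 u5 u6.
  ring.
Qed.

Lemma Rall_aux m : forall p, (n.+1 <= p + m)%N -> Rstmt p.
Proof.
elim: m => [|m ih] p hp; first by apply: Rbase; rewrite addn0 in hp.
by apply: Rstep; apply: ih; rewrite addSnnS.
Qed.

Lemma Rall p : Rstmt p.
Proof. by apply: (@Rall_aux n.+1); rewrite leq_addl. Qed.

End Chase.


Section Wtop.
Variables (n : nat) (d : 'I_n.+1 -> nat).
Hypothesis hmono : forall i j : 'I_n.+1, (i <= j)%N -> (d i <= d j)%N.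
Notation I := 'I_n.+1.
Notation w := (wset d).

Lemma card_ge (A : {set I}) (a : nat) :
  (forall j : I, j \in A -> (a <= j)%N) -> (#|A| <= n.+1 - a)%N.
Proof.
move=> h; rewrite cardE -(size_map val).
rewrite -(size_iota a (n.+1 - a)); apply: uniq_leq_size.
  by rewrite map_inj_uniq ?enum_uniq //; apply: val_inj.
move=> x /mapP [j]; rewrite mem_enum => jA ->; rewrite mem_iota.
have := h j jA; have := ltn_ord j => h1 h2; apply/andP; rewrite /=; split; lia.
Qed.

Lemma wtopS q : (q <= n)%N -> wtop d q.+1 = (d (inord (n - q)) + wtop d q)%N.
Proof.
move=> hq; rewrite /wtop (bigD1 (inord (n - q))) /=; last by rewrite inordK; lia.
congr (_ + _)%N; apply: eq_bigl => j.
have hi : nat_of_ord (inord (n - q) : I) = (n - q)%N by rewrite inordK; lia.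
apply/idP/idP => [/andP [h1 h2] | h].
  have : val j != (n - q)%N by rewrite -hi; apply: contraNneq h2 => /val_inj ->.
  rewrite /=; move/eqP; lia.
apply/andP; split; first by lia.
apply/eqP => e; rewrite e hi in h; lia.
Qed.

Lemma wtop0 : wtop d 0 = 0%N.
Proof. by rewrite /wtop big1 // => j; rewrite subn0 leqNgt ltn_ord. Qed.

Lemma wtop_ge q (A : {set I}) : #|A| = q -> (w A <= wtop d q)%N.
Proof.
elim: q A => [|q ih] A hA.
  by rewrite (cards0_eq hA) /wset big_set0 wtop0.
have [x xA] : exists x, x \in A.
  by apply/set0Pn; apply/negP => /eqP A0; rewrite A0 cards0 in hA.
case: (@arg_minnP _ x (mem A) (fun i : I => (i : nat)) xA) => a aA0 amin.
have aA : a \in A by [].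
have hle := card_ge amin; rewrite hA in hle.
have hqn : (q <= n)%N by have := ltn_ord a; lia.
rewrite (wsetD1 d aA) wtopS //; apply: leq_add.
  by apply: hmono; rewrite inordK; lia.
by apply: ih; move: hA; rewrite (cardsD1 a) aA add1n; case.
Qed.

Hypothesis hn : (1 <= n)%N.
Hypothesis hd0 : (1 <= d ord0)%N.

Lemma wset1 (a : I) : w [set a] = d a.
Proof. by rewrite /wset big_set1. Qed.

Lemma wbound p (A : {set I}) : #|A| = p.+1 ->
  ((w A)%:Z <= (wtop d 2)%:Z + wprev d p)%R.
Proof.
move=> hA.
have [x xA] : exists x, x \in A.
  by apply/set0Pn; apply/negP => /eqP A0; rewrite A0 cards0 in hA.
have hA' : #|A :\ x| = p by move: hA; rewrite (cardsD1 x) xA add1n; case.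
case: p hA hA' => [|p] hA hA' /=.
  have -> : A = [set x] by rewrite -(setD1K xA) (cards0_eq hA') setU0.
  rewrite wset1 wtopS // wtopS // wtop0.
  have h1 : (d x <= d (inord (n - 0)))%N by apply: hmono; rewrite subn0 inordK //; have := ltn_ord x; lia.
  have h2 : (d ord0 <= d (inord (n - 1)))%N by apply: hmono.
  lia.
have [y yA] : exists y, y \in A :\ x.
  by apply/set0Pn; apply/negP => /eqP A0; rewrite A0 cards0 in hA'.
have hA'' : #|A :\ x :\ y| = p by move: hA'; rewrite (cardsD1 y) yA add1n; case.
have yx : y != x by move: yA; rewrite in_setD1 => /andP [].
have e : w A = (w [set x; y] + w (A :\ x :\ y))%N.
  rewrite (wsetD1 d xA) (wsetD1 d yA) wsetU1 ?wset1 ?addnA //.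
  by rewrite in_set1 eq_sym.
have h2 : (w [set x; y] <= wtop d 2)%N by apply: wtop_ge; rewrite cards2 eq_sym yx.
have h3 := wtop_ge hA''.
rewrite e; lia.
Qed.

End Wtop.


Section Mono.
Variables (k : fieldType) (n : nat) (d : 'I_n.+1 -> nat).
Hypothesis dpos : forall i, (0 < d i)%N.
Notation S := {mpoly k[n.+1]}.
Notation I := 'I_n.+1.
Notation hom := (@whomog k n d).

Lemma homXm (m : 'X_{1..n.+1}) : hom (wdeg d m) 'X_[m].
Proof. by move=> m'; rewrite msuppX inE => /eqP ->. Qed.

Lemma hom_neg e (f : S) : (e < 0)%R -> hom e f -> f = 0.
Proof.
move=> he hf; apply: msuppnil0; case E: (msupp f) => [|m s] //.
have := hf m; rewrite E inE eqxx => /(_ isT) h; lia.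
Qed.

Lemma decomp (e : nat) (f : S) : (0 < e)%N -> hom e f ->
  exists h : I -> S, f = \sum_i 'X_i * h i /\ forall i, hom (e%:Z - (d i)%:Z) (h i).
Proof.
move=> he hf; rewrite (mpolyE f).
have : forall m, m \in msupp f -> wdeg d m = e by move=> m /hf [].
elim: (msupp f) => [|m s ih] hs.
  exists (fun _ => 0); split => [|i]; last exact: hom0.
  by rewrite big_nil big1 // => i _; rewrite mulr0.
have [h [eh hh]] := ih (fun m' hm' => hs m' (@mem_behead _ (m :: s) _ hm')).
have hm : wdeg d m = e by apply: hs; rewrite inE eqxx.
have [i hi] : exists i, (0 < m i)%N.
  case: (pickP (fun i => (0 < m i)%N)) => [i hi|hn]; first by exists i.
  move: hm he; rewrite /wdeg big1 => [<-//|i _].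
  by have := hn i; rewrite /= lt0n => /negbFE /eqP ->.
pose m' := (m - U_(i))%MM.
have em : m = (U_(i) + m')%MM.
  rewrite addmC submK //; apply/mnm_lepP => j; rewrite mnm1E.
  by case: (eqVneq i j) => [<-|] //.
exists (fun j => h j + (if j == i then f@_m *: 'X_[m'] else 0)); split.
  rewrite big_cons eh addrC; under [X in _ = X]eq_bigr => j _ do rewrite mulrDr.
  rewrite big_split /=; congr (_ + _).
  rewrite (bigD1 i) //= eqxx big1 ?addr0 => [|j /negbTE -> ]; last by rewrite mulr0.
  by rewrite [X in 'X_[X]]em mpolyXD scalerAr.
move=> j; apply: homD => //; case: eqP => [->|_]; last exact: hom0.
apply: homZ; have := homXm (m:=m'); apply: hom_eq.
move: hm; rewrite em wdegD wdegU; lia.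
Qed.

End Mono.

Section Main.
Variables (k : fieldType) (n : nat) (d : 'I_n.+1 -> nat).
Notation S := {mpoly k[n.+1]}.
Notation I := 'I_n.+1.
Notation hom := (@whomog k n d).

Lemma hom_wcomp e (f : S) : hom e (wcomp d e f).
Proof.
rewrite /wcomp; apply: hom_sum => m /eqP <-; apply: homZ; exact: homXm.
Qed.

Lemma wcomp_sum (f : S) :
  f = \sum_(e < (\max_(m <- msupp f) wdeg d m).+1) wcomp d (e : nat)%:Z f.
Proof.
rewrite {1}(mpolyE f) /wcomp.
under [RHS]eq_bigr => e _ do rewrite big_mkcond.
rewrite [RHS]exchange_big /=; apply: eq_big_seq => m hm.
have hlt : (wdeg d m < (\max_(m <- msupp f) wdeg d m).+1)%N.
  by rewrite ltnS; apply: (@leq_bigmax_seq _ (msupp f) xpredT (wdeg d) m hm).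
rewrite (bigD1 (Ordinal hlt)) //= eqxx big1 ?addr0 // => e he.
case: eqP => // /eqP; rewrite eqz_nat => /eqP h.
by move: he; rewrite -(inj_eq val_inj) /= h eqxx.
Qed.

Lemma dK_set0 (b : {set I} -> {set I} -> S) J :
  dK b J set0 = \sum_(i : I) 'X_i * b J [set i].
Proof.
rewrite /dK; apply: eq_big => [i|i _]; first by rewrite in_set0.
rewrite setU0 -(setU0 [set i]) sg_self sgE.
have -> : cnt i set0 = 0%N by rewrite /cnt; apply/eqP; rewrite cards_eq0; apply/eqP/setP => y; rewrite !inE.
by rewrite expr0 mul1r setU0.
Qed.

Variable IX : S -> Prop.
Variable b : int.

Definition gen (f : S) := exists s : seq (S * S),
    (forall q, q \in s -> IX q.2 /\ exists e : int, e < b /\ hom e q.2) /\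
    f = \sum_(q <- s) q.1 * q.2.

Lemma gen0 : gen 0.
Proof. by exists [::]; split => //; rewrite big_nil. Qed.

Lemma genD f g : gen f -> gen g -> gen (f + g).
Proof.
move=> [s1 [h1 e1]] [s2 [h2 e2]]; exists (s1 ++ s2); split.
  by move=> q; rewrite mem_cat => /orP [/h1|/h2].
by rewrite big_cat e1 e2.
Qed.

Lemma genM h f : gen f -> gen (h * f).
Proof.
move=> [s [hs ef]]; exists [seq (h * q.1, q.2) | q <- s]; split.
  by move=> q /mapP [q' /hs hq' ->].
by rewrite big_map ef big_distrr /=; apply: eq_bigr => q _; rewrite mulrA.
Qed.

Lemma gen_sum (T : Type) (r : seq T) (P : pred T) (F : T -> S) :
  (forall i, P i -> gen (F i)) -> gen (\sum_(i <- r | P i) F i).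
Proof. by move=> h; apply: (big_ind gen) => //; [apply: gen0 | apply: genD]. Qed.

Lemma gen_base e f : IX f -> hom e f -> e < b -> gen f.
Proof.
move=> hf he hb; exists [:: (1, f)]; split; last by rewrite big_seq1 mul1r.
by move=> q; rewrite inE => /eqP -> /=; split => //; exists e.
Qed.

End Main.


Lemma deg0 (k : fieldType) (n : nat) (d : 'I_n.+1 -> nat) (IX : {mpoly k[n.+1]} -> Prop)
  (dpos : forall i, (0 < d i)%N) (hI : is_ideal IX) (h1 : ~ IX 1) (f : {mpoly k[n.+1]}) :
  IX f -> whomog d 0 f -> f = 0.
Proof.
move=> hf h0.
have e : f = (\sum_(m <- msupp f) f@_m) *: 1.
  rewrite {1}(mpolyE f) scaler_suml; apply: eq_big_seq => m hm.
  have hm0 : m = 0%MM.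
    have := h0 m hm; rewrite /wdeg => /eqP; rewrite eqz_nat sum_nat_eq0 => /forallP hz.
    apply/mnmP => i; rewrite mnm0E; have := hz i; rewrite muln_eq0 => /orP [/eqP //|].
    by rewrite eqn0Ngt dpos.
  by rewrite hm0 mpolyX0.
move: e hf; set c := \sum_(m <- msupp f) _ => e hf.
case: (eqVneq c 0) => [c0|cn0]; first by rewrite e c0 scale0r.
exfalso; apply: h1.
have -> : (1 : {mpoly k[n.+1]}) = (c^-1 *: 1) * f.
  by rewrite e -scalerAl mul1r scalerA mulVf // scale1r.
by apply: (ImulP hI).
Qed.

Unset Implicit Arguments.
Set Strict Implicit.

Theorem corollary1p7 (k : fieldType) (n : nat) (d : 'I_n.+1 -> nat)
    (hn : (1 <= n)%N)
    (hd0 : (1 <= d ord0)%N)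
    (hmono : forall i j : 'I_n.+1, (i <= j)%N -> (d i <= d j)%N)
    (IX : {mpoly k[n.+1]} -> Prop)
    (hhom : homogeneous_ideal d IX)
    (hprime : is_prime_ideal IX)
    (hsat : saturated IX)
    (r : int)
    (hreg : koszul_regularity_is d IX r) :
  generated_in_degrees_lt d IX (r + (wtop d 2)%:Z).
Proof.
have [hI hn1 _] := hprime.
have [_ hcomp] := hhom.
have [hkr _] := hreg.
have dpos : forall i, (0 < d i)%N.
  by move=> i; apply: (leq_trans hd0); apply: hmono.
set b := r + (wtop d 2)%:Z.
have claim : forall E e g, (e <= E)%N -> IX g -> whomog d e%:Z g -> gen d IX b g.
  elim=> [|E IH] e g hE hg hom.
    have e0 : e = 0%N by lia.
    by rewrite e0 in hom; rewrite (deg0 dpos hI hn1 hg hom); apply: gen0.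
  case: (ltP (e%:Z) b) => heb; first exact: gen_base hg hom heb.
  case: (posnP e) => [e0|epos].
    by rewrite e0 in hom; rewrite (deg0 dpos hI hn1 hg hom); apply: gen0.
  have [h [eg hh]] := decomp epos hom.
  have hvan : forall (p : nat) (A : {set 'I_n.+1}), #|A| = p.+1 ->
      loccoh_vanish d IX p (e%:Z - (wset d A)%:Z).
    move=> p A hA; apply: hkr.
    have := wbound hmono hn hd0 hA; rewrite /b in heb.
    move: heb; move: (wset d A) (wtop d 2) (wprev d p) => x y z; lia.
  pose z := fun (J A : {set 'I_n.+1}) => \sum_(i in A) h i.
  have hz : dhom d e%:Z 0 1 0 z.
    move=> J A hJ /eqP /cards1P [i ->]; rewrite /z big_set1 wset1.
    have := hh i; apply: hom_eq; lia.
  have hz2 : forall K B : {set 'I_n.+1}, #|K| = 1%N -> #|B| = 0%N -> Z IX K (dK (dC 0 z) K B).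
    move=> K B hK hB; rewrite dKdC; apply: (dC_Z hI (q := 0%N)) => // L hL.
    rewrite (cards0_eq hB) dK_set0; apply: (ZI hI).
    suff -> : \sum_(i < n.+1) 'X_i * z L [set i] = g by [].
    by rewrite eg; apply: eq_bigr => i _; rewrite /z big_set1.
  have [t [c [gg [hc [_ hZ]]]]] := Rall hI hvan (p := 0%N) hz hz2.
  pose u := fun i => h i - dK c set0 [set i].
  have hu : forall i, IX (u i).
    move=> i; have := hZ set0 [set i] (cards0 _) (cards1 i); move/Zset0.
    by rewrite xpow_set0 mul1r /dC big_set0 subr0 /z big_set1.
  have hhu : forall i, whomog d (e%:Z - (d i)%:Z) (u i).
    move=> i; apply: homB => //.
    have := hom_dK hc (cards0 _) (cards1 i); apply: hom_eq; rewrite wset1 /wset big_set0 muln0.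
    move: (d i) => x; lia.
  have egu : g = \sum_(i : 'I_n.+1) 'X_i * u i.
    rewrite eg /u; under [RHS]eq_bigr => i _ do rewrite mulrBr.
    by rewrite sumrB -dK_set0 dKdK subr0.
  rewrite egu; apply: gen_sum => i _; apply: genM.
  case: (leqP (d i) e) => hdi.
    apply: (IH (e - d i)%N); first by have := dpos i; lia.
      exact: hu.
    have := hhu i; apply: hom_eq; lia.
  rewrite (hom_neg _ (hhu i)); first exact: gen0.
  lia.
move=> f hf.
rewrite (wcomp_sum d f); apply: gen_sum => e _.
apply: (claim e e) => //; first exact: hcomp.
exact: hom_wcomp.
Qed.
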